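(* Given integers $1 \le k' < k$ and reals $\beta, \xi > 0$, there exist $C, T > 0$ such that the following holds for all sufficiently large $n$ and all $m \ge C n^{1 - 1/(k-1)}$: for all but at most $\beta^m \binom{n}{m}$ of the $m$-element sets $S \subseteq [n]$, there exists $X \subset S$ with $|X| \le \xi m$ such that $$\frac{1}{n} \sum_{x \in [n]} \mathrm{AP}_{k',k}(x, S \setminus X, [n])^2 \le T \mu_e^2,$$ where $\mu_e = n (m/n)^{k'}$.
   Context: $[n] = \{1, \ldots, n\}$. A $k$-term arithmetic progression (AP) is a set of the form $\{a, a+d, \ldots, a+(k-1)d\}$ of integers with $d \ge 1$. For $x \in [n]$, sets $S \subseteq D \subseteq [n]$ and integers $0 \le k' \le k$, $\mathrm{AP}_{k',k}(x, S, D)$ denotes the number of $k$-term APs contained in $D$ which contain $x$ and contain at least $k'$ elements of $S \setminus \{x\}$. *)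

(* Defs.v *)
From Stdlib Require Import Reals.
From mathcomp Require Import all_boot.
Set Implicit Arguments. Unset Strict Implicit. Unset Printing Implicit Defensive.

(* Subsets of [n] = {1,...,n} are represented as S : {set 'I_n.+1} with
   ord0 \notin S; a natural number y is "in S" iff some element of S has value y. *)
Definition inS (n : nat) (S : {set 'I_n.+1}) (y : nat) : bool :=
  [exists z in S, val z == y].

Definition subset_of_n (n : nat) (S : {set 'I_n.+1}) : bool := ord0 \notin S.

(* AP_{k',k}(x, S, D) for D a subset of [n] (given as a predicate on nat):
   number of k-term APs {a, a+d, ..., a+(k-1)d} (d >= 1) contained in D,
   containing x, and containing at least k' elements of S \ {x}.
   For k >= 2 each such set corresponds to a unique pair (a,d); since D is
   a subset of [n], a and d range over 0..n.  The elements a+id (i<k) are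
   distinct, so counting indices i counts elements. *)
Definition AP (n k' k : nat) (x : nat) (S D : pred nat) : nat :=
  #|[set ad : 'I_n.+1 * 'I_n.+1 |
      let a := val ad.1 in let d := val ad.2 in
      [&& 0 < d,
          all (fun i => D (a + i * d)) (iota 0 k),
          has (fun i => a + i * d == x) (iota 0 k) &
          k' <= count (fun i => S (a + i * d) && (a + i * d != x)) (iota 0 k)]]|.

Definition intn (n : nat) : pred nat := fun y => (0 < y) && (y <= n).
Delimit Scope R_scope with Re.

(* Main.v *)
Require Import Defs.
From Stdlib Require Import Reals.
From mathcomp Require Import all_boot.
Set Warnings "-notation-overridden".
From Stdlib Require Import Lra.
From mathcomp Require Import zify.
Set Implicit Arguments. Unset Strict Implicit. Unset Printing Implicit Defensive.

Lemma sum_subset_le (I : finType) (A B : {set I}) (F : I -> nat) :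
  A \subset B -> \sum_(i in A) F i <= \sum_(i in B) F i.
Proof.
move=> AB; rewrite [X in _ <= X](big_setID A) /= (setIidPr AB); exact: leq_addr.
Qed.

Section Deletion.
Variables (T I : finType) (G : {set I}) (supp : I -> {set T}).

Fixpoint Zc (S : {set T}) (q : nat) : nat :=
  match q with
  | 0 => 1
  | q'.+1 => \sum_(c in G | supp c \subset S) Zc (S :\: supp c) q'
  end.

Definition fc (S : {set T}) := #|[set c in G | supp c \subset S]|.

Lemma Zc_lower (L s0 : nat) : (forall c, c \in G -> #|supp c| <= s0) ->
  forall q (S : {set T}), (forall X : {set T}, X \subset S -> #|X| <= q * s0 -> L < fc (S :\: X)) ->
  L.+1 ^ q <= Zc S q.
Proof.
move=> hs; elim=> [|q IH] S hS /=; first by rewrite expn0.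
have h1 : forall c, (c \in G) && (supp c \subset S) -> L.+1 ^ q <= Zc (S :\: supp c) q.
  move=> c /andP [cG cS]; apply: IH => X XS Xq.
  have := hS (X :|: supp c).
  rewrite setDDl setUC; apply.
    by rewrite subUset cS (subset_trans XS) // subsetDl.
  apply: leq_trans (leq_card_setU _ _) _.
  by rewrite mulSn leq_add // (hs _ cG).
apply: leq_trans _ (leq_sum _ h1).
rewrite sum_nat_const expnS leq_mul2r; apply/orP; right.
have := hS set0 (sub0set _); rewrite cards0 setD0 => /(_ isT).
rewrite /fc => h; apply: leq_trans h _; apply: subset_leq_card; apply/subsetP => c; rewrite !inE.
by [].
Qed.

Lemma bin_step (M N u : nat) : M <= N -> forall d m, m * N <= M * d -> u <= m ->
  'C(d - u, m - u) * N ^ u <= 'C(d, m) * M ^ u.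
Proof.
move=> MN; elim: u => [|u IH] d m hmd hu; first by rewrite !subn0 !expn0 !muln1.
case: m hmd hu => [//|m] hmd hu.
case: d hmd => [|d] hmd.
  have -> : N = 0 by nia.
  by rewrite exp0n // muln0.
rewrite !subSS expnS [M ^ u.+1]expnS.
have h1 := IH d m ltac:(nia) hu.
have h2 : 'C(d, m) * N <= 'C(d.+1, m.+1) * M.
  have e := mul_bin_diag d.+1 m; simpl in e.
  have : 'C(d, m) * N * d.+1 <= 'C(d.+1, m.+1) * M * d.+1.
    have -> : 'C(d, m) * N * d.+1 = 'C(d.+1, m.+1) * (m.+1 * N).
      by rewrite mulnC mulnA e; nia.
    rewrite -mulnA leq_mul2l; apply/orP; right.
    by [].
  by rewrite leq_pmul2r.
apply: (@leq_trans (N * ('C(d, m) * M ^ u))).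
  by rewrite mulnCA leq_mul2l h1 orbT.
by rewrite mulnA (mulnC N) [X in _ <= X]mulnA leq_mul2r h2 orbT.
Qed.

Definition Sm (D : {set T}) (m : nat) := [set S : {set T} | (S \subset D) && (#|S| == m)].

Lemma sumZ (s0 M N : nat) : (forall c, c \in G -> #|supp c| <= s0) -> M <= N ->
  forall q (D : {set T}) m, m * N <= M * #|D| ->
  \sum_(S in Sm D m) Zc S q * N ^ (s0 * q) <=
    'C(#|D|, m) * (\sum_(c in G) M ^ #|supp c| * N ^ (s0 - #|supp c|)) ^ q.
Proof.
move=> hs MN; elim=> [|q IH] D m hmd.
  rewrite expn0 muln1 /= (eq_bigr (fun _ => 1)); last by move=> *; rewrite muln0 expn0.
  by rewrite sum1_card /Sm cards_draws.
set W := \sum_(c in G) _.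
rewrite /=.
rewrite (eq_bigr (fun S : {set T} => \sum_(c in G | supp c \subset S) (Zc (S :\: supp c) q * N ^ (s0 * q) * N ^ s0))); last first.
  move=> S _; rewrite big_distrl /=; apply: eq_bigr => c _; by rewrite mulnS addnC expnD mulnA.
rewrite (exchange_big_dep (fun c => c \in G)) /=; last by move=> S c _ /andP [].
rewrite expnS mulnCA {1}/W big_distrl /=.
apply: leq_sum => c cG.
set U := supp c.
have hU := hs c cG.
case: (boolP ((U \subset D) && (#|U| <= m))) => [/andP [UD Um] | hn]; last first.
  rewrite big1 // => S /andP [SS /andP [_ US]].
  move: SS; rewrite inE => /andP [SD /eqP Sm'].
  exfalso; move/negP: hn; apply; rewrite (subset_trans US SD) /= -Sm'.
  exact: subset_leq_card.
pose A := [set S in Sm D m | U \subset S].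
have -> : \sum_(S in Sm D m | (c \in G) && (U \subset S)) Zc (S :\: U) q * N ^ (s0 * q) * N ^ s0 =
    \sum_(S in A) Zc (S :\: U) q * N ^ (s0 * q) * N ^ s0.
  by apply: eq_bigl => S; rewrite !inE cG.
rewrite -big_distrl /=.
rewrite -(big_imset (fun S' => Zc S' q * N ^ (s0 * q)) (h := fun S => S :\: U)) /=; last first.
  move=> S1 S2; rewrite !inE => /andP [_ h1] /andP [_ h2] e.
  apply/setP => z; case: (boolP (z \in U)) => zU.
    by rewrite (subsetP h1 _ zU) (subsetP h2 _ zU).
  by have := congr1 (fun X : {set T} => z \in X) e; rewrite /= !inE zU.
have sub : (fun S => S :\: U) @: A \subset Sm (D :\: U) (m - #|U|).
  apply/subsetP => z /imsetP [S]; rewrite !inE => /andP [/andP [SD /eqP Sm'] US] ->.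
  by rewrite setSD //= cardsDS // Sm'.
have hDU : #|D :\: U| = #|D| - #|U| by rewrite cardsDS.
apply: (@leq_trans ((\sum_(S in Sm (D :\: U) (m - #|U|)) Zc S q * N ^ (s0 * q)) * N ^ s0)).
  rewrite leq_mul2r; apply/orP; right.
  exact: sum_subset_le.
apply: (@leq_trans ('C(#|D| - #|U|, m - #|U|) * W ^ q * N ^ s0)).
  rewrite leq_mul2r; apply/orP; right; rewrite -hDU; apply: IH.
  rewrite hDU; nia.
have -> : N ^ s0 = N ^ #|U| * N ^ (s0 - #|U|) by rewrite -expnD subnKC.
have hb := @bin_step M N #|U| MN _ _ hmd Um.
apply: (@leq_trans (('C(#|D|, m) * M ^ #|U|) * (N ^ (s0 - #|U|) * W ^ q))).
  set a := 'C(_, _) * N ^ #|U| in hb *.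
  have -> : 'C(#|D| - #|U|, m - #|U|) * W ^ q * (N ^ #|U| * N ^ (s0 - #|U|))
     = a * (N ^ (s0 - #|U|) * W ^ q) by rewrite /a; nia.
  by rewrite leq_mul2r hb orbT.
apply: eq_leq; nia.
Qed.
End Deletion.

Lemma card_count k (P : pred nat) : #|[set i : 'I_k | P (val i)]| = count P (iota 0 k).
Proof.
rewrite -sum1_card -sum1_count.
rewrite (eq_bigl (fun i : 'I_k => P i)); last by move=> i; rewrite inE.
by rewrite -(big_mkord P (fun _ => 1)) /index_iota subn0.
Qed.

Lemma wmono m N0 s u v : m <= N0 -> v <= u -> u <= s -> m ^ u * N0 ^ (s - u) <= m ^ v * N0 ^ (s - v).
Proof.
move=> mN vu us.
have h : m ^ (u - v) <= N0 ^ (u - v) by elim: (u - v) => // j IH; rewrite !expnS leq_mul.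
have -> : m ^ u = m ^ v * m ^ (u - v) by rewrite -expnD subnKC.
have -> : N0 ^ (s - v) = N0 ^ (u - v) * N0 ^ (s - u) by rewrite -expnD; congr (_ ^ _); lia.
by rewrite -!mulnA leq_mul // leq_mul.
Qed.

Section APpart.
Variables (n k k' : nat).
Definition H := (('I_n.+1 * 'I_n.+1) * {set 'I_k})%type.
Definition Ix := ('I_n.+1 * (H * H))%type.
Definition okh (x : nat) (h : H) : bool :=
  let a := val h.1.1 in let d := val h.1.2 in
  [&& 0 < d, [forall i : 'I_k, intn n (a + i * d)], [exists i : 'I_k, a + i * d == x],
      [forall i in h.2, a + i * d != x] & k' <= #|h.2| ].
Definition supph (h : H) : {set 'I_n.+1} :=
  [set z : 'I_n.+1 | [exists i in h.2, val z == val h.1.1 + val i * val h.1.2]].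
Definition Gam : {set Ix} := [set c : Ix | okh (val c.1) c.2.1 && okh (val c.1) c.2.2].
Definition suppc (c : Ix) := supph c.2.1 :|: supph c.2.2.

Lemma supph_le h : #|supph h| <= #|h.2|.
Proof.
set f := fun i : 'I_k => (inord (val h.1.1 + val i * val h.1.2) : 'I_n.+1).
apply: leq_trans (leq_imset_card f h.2).
apply: subset_leq_card; apply/subsetP => z; rewrite inE => /existsP [i /andP [iJ /eqP e]].
by apply/imsetP; exists i => //; rewrite /f -e inord_val.
Qed.

Lemma supph_eq x h : okh x h -> #|supph h| = #|h.2|.
Proof.
case/and5P => d0 /forallP hin _ _ _.
apply/eqP; rewrite eqn_leq supph_le /=.
set f := fun i : 'I_k => (inord (val h.1.1 + val i * val h.1.2) : 'I_n.+1).
have hv : forall i : 'I_k, nat_of_ord (f i) = val h.1.1 + val i * val h.1.2.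
  move=> i; rewrite /f inordK //; have := hin i; rewrite /intn => /andP [_ hh]; by rewrite ltnS.
rewrite -[#|h.2|](@card_in_imset _ _ f); last first.
  move=> i j _ _ e; have := congr1 (@nat_of_ord _) e; rewrite !hv => e'.
  apply: val_inj; change (nat_of_ord i = nat_of_ord j); move: d0 e'; rewrite /=; nia.
apply: subset_leq_card; apply/subsetP => z /imsetP [i iJ ->].
by rewrite inE; apply/existsP; exists i; rewrite iJ /=; apply/eqP; exact: hv.
Qed.

Lemma supp_le c : #|suppc c| <= k + k.
Proof.
apply: leq_trans (leq_card_setU _ _) _.
apply: leq_add; apply: leq_trans (supph_le _) _; 
  by apply: leq_trans (max_card _) _; rewrite card_ord.
Qed.

Definition Aset (x : nat) (S' : {set 'I_n.+1}) :=
  [set ad : 'I_n.+1 * 'I_n.+1 |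
      let a := val ad.1 in let d := val ad.2 in
      [&& 0 < d,
          all (fun i => intn n (a + i * d)) (iota 0 k),
          has (fun i => a + i * d == x) (iota 0 k) &
          k' <= count (fun i => inS S' (a + i * d) && (a + i * d != x)) (iota 0 k)]].

Lemma AP_Aset x S' : AP n k' k x (inS S') (intn n) = #|Aset x S'|.
Proof. by []. Qed.

Definition Jx (x : nat) (S' : {set 'I_n.+1}) (ad : 'I_n.+1 * 'I_n.+1) : {set 'I_k} :=
  [set i : 'I_k | inS S' (val ad.1 + val i * val ad.2) && (val ad.1 + val i * val ad.2 != x)].

Lemma inA_ok x S' ad : ad \in Aset x S' ->
  okh x (ad, Jx x S' ad) && (supph (ad, Jx x S' ad) \subset S').
Proof.
rewrite inE /= => /and4P [d0 /allP hall /hasP [i0 i0in /eqP ei0] hc].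
apply/andP; split.
  apply/and5P; split => //=.
  - apply/forallP => i; apply: hall; rewrite mem_iota /=; exact: ltn_ord.
  - apply/existsP; rewrite mem_iota /= in i0in; exists (Ordinal i0in); by rewrite /= ei0.
  - by apply/forallP => i; apply/implyP; rewrite inE => /andP [].
  - by rewrite /Jx (card_count k (fun j => inS S' (val ad.1 + j * val ad.2) && (val ad.1 + j * val ad.2 != x))).
apply/subsetP => z; rewrite inE => /existsP [i /andP [iJ /eqP e]].
move: iJ; rewrite inE => /andP [/existsP [z' /andP [z'S /eqP e']] _].
by have -> : z = z' by apply: val_inj; rewrite e e'.
Qed.

Definition Phi (x : nat) (S' : {set 'I_n.+1}) (p : ('I_n.+1 * 'I_n.+1) * ('I_n.+1 * 'I_n.+1)) : H * H :=
  ((p.1, Jx x S' p.1), (p.2, Jx x S' p.2)).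

Lemma AP_sq_le (S' : {set 'I_n.+1}) :
  \sum_(1 <= x < n.+1) (AP n k' k x (inS S') (intn n)) ^ 2 <= fc Gam suppc S'.
Proof.
apply: (@leq_trans (\sum_(0 <= x < n.+1) (AP n k' k x (inS S') (intn n)) ^ 2)).
  by rewrite (big_ltn (ltn0Sn n)) leq_addl.
rewrite big_mkord /fc -sum1_card.
pose Q := fun (x : 'I_n.+1) (h : H * H) => ((x, h) \in Gam) && (suppc (x, h) \subset S').
rewrite (eq_bigl (fun c : Ix => predT c.1 && Q c.1 c.2)); last first.
  by case=> x h; rewrite /Q !inE.
rewrite -(pair_big_dep predT Q (fun _ _ => 1)).
apply: leq_sum => x _.
rewrite sum1dep_card AP_Aset -mulnn -cardsX.
rewrite -(card_imset _ (f := Phi x S')); last first.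
  by move=> [p1 p2] [q1 q2] /(congr1 (fun h => (h.1.1, h.2.1))) /= [-> ->].
apply: subset_leq_card; apply/subsetP => h /imsetP [[ad1 ad2] /setXP [h1 h2] ->].
have /andP [o1 s1] := inA_ok h1.
have /andP [o2 s2] := inA_ok h2.
by rewrite inE /Q inE /= o1 o2 /suppc /= subUset s1 s2.
Qed.

Definition pos (x : nat) (h : H) : option 'I_k :=
  [pick i : 'I_k | val h.1.1 + val i * val h.1.2 == x].
Definition gh (x : nat) (h : H) := (pos x h, h.1.2, h.2).

Lemma pos_some x h : okh x h -> exists2 i, pos x h = Some i & val h.1.1 + val i * val h.1.2 = x.
Proof.
case/and5P => _ _ /existsP [i0 hi0] _ _.
rewrite /pos; case: pickP => [i /eqP hi | hn]; first by exists i.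
by have := hn i0; rewrite hi0.
Qed.

Lemma gh_inj x h h' : okh x h -> okh x h' -> gh x h = gh x h' -> h = h'.
Proof.
move=> o o' e.
have [i pi ei] := pos_some o; have [i' pi' ei'] := pos_some o'.
move: e; rewrite /gh pi pi' => -[ii e2 e3]; subst i'.
case: h o pi ei e2 e3 => [[a d] J]; case: h' o' pi' ei' => [[a' d'] J'] /= _ _ ei' _ _ ei e2 e3.
subst d' J'.
have e : nat_of_ord a = nat_of_ord a' by lia.
by rewrite (val_inj e).
Qed.

Definition gc (c : Ix) := (c.1, (gh c.1 c.2.1, gh c.1 c.2.2)).

Lemma card_Gam : #|Gam| <= #|{: 'I_n.+1 * ((option 'I_k * 'I_n.+1 * {set 'I_k}) * (option 'I_k * 'I_n.+1 * {set 'I_k}))}|.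
Proof.
apply: (@leq_card_in _ _ gc).
move=> [x [h1 h2]] [x' [h1' h2']]; rewrite !inE /= => /andP [o1 o2] /andP [o1' o2'].
move=> e; have ex := congr1 fst e; have e1 := congr1 (fun p => p.2.1) e;
have e2 := congr1 (fun p => p.2.2) e; rewrite /gc /= in ex e1 e2; subst x'.
by rewrite (gh_inj o1 o1' e1) (gh_inj o2 o2' e2).
Qed.

Definition disj (c : Ix) := supph c.2.1 :&: supph c.2.2 == set0.
Definition Gamo := [set c in Gam | ~~ disj c].
Definition ppc (c : Ix) := [pick p : 'I_k * 'I_k | (p.1 \in c.2.1.2) && (p.2 \in c.2.2.2) &&
   (val c.2.1.1.1 + val p.1 * val c.2.1.1.2 == val c.2.2.1.1 + val p.2 * val c.2.2.1.2)].
Definition go (c : Ix) := (c.1, gh c.1 c.2.1, c.2.2.2, ppc c, pos c.1 c.2.2).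

Lemma ppc_some c : ~~ disj c -> exists2 p, ppc c = Some p &
  (p.1 \in c.2.1.2) && (p.2 \in c.2.2.2) &&
   (val c.2.1.1.1 + val p.1 * val c.2.1.1.2 == val c.2.2.1.1 + val p.2 * val c.2.2.1.2).
Proof.
move=> /set0Pn [z]; rewrite !inE => /andP [/existsP [i /andP [i1 /eqP e1]] /existsP [l /andP [l2 /eqP e2]]].
rewrite /ppc; case: pickP => [p hp | hn]; first by exists p.
by have := hn (i, l); rewrite /= i1 l2 -e1 -e2 eqxx.
Qed.

Lemma card_Gamo : #|Gamo| <= #|{: 'I_n.+1 * (option 'I_k * 'I_n.+1 * {set 'I_k}) * {set 'I_k} * option ('I_k * 'I_k) * option 'I_k}|.
Proof.
apply: (@leq_card_in _ _ go).
move=> [x [h1 h2]] [x' [h1' h2']]; rewrite !inE /= => /andP [/andP [o1 o2] nd] /andP [/andP [o1' o2'] nd'].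
move=> e; have ex := congr1 (fun p => p.1.1.1.1) e; have e1 := congr1 (fun p => p.1.1.1.2) e.
have eJ := congr1 (fun p => p.1.1.2) e; have ep := congr1 (fun p => p.1.2) e.
have epos := congr1 (fun p => p.2) e.
rewrite /go /= in ex e1 eJ ep epos; clear e; subst x'.
have eh1 := gh_inj o1 o1' e1; subst h1'.
have [p pp hp] := ppc_some nd; have [p' pp' hp'] := ppc_some nd'.
move: ep; rewrite pp pp' => -[epp]; subst p'.
have [j pj ej] := pos_some o2; have [j' pj' ej'] := pos_some o2'.
move: epos; rewrite pj pj' => -[ejj]; subst j'.
case: h2 o2 nd pp hp pj ej eJ => [[a2 d2] J2] o2 nd pp hp pj ej eJ.
case: h2' o2' nd' pp' hp' pj' ej' eJ => [[a2' d2'] J2'] o2' nd' pp' hp' pj' ej' /= eJ.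
subst J2'.
move: hp hp' => /= /andP [/andP [_ p2J] /eqP q1] /andP [_ /eqP q2].
have hne : nat_of_ord a2 + p.2 * d2 != x.
  by case/and5P: o2 => _ _ _ /forallP /(_ p.2) /implyP /(_ p2J).
have hjp : nat_of_ord p.2 <> nat_of_ord j by move=> hh; move: hne; rewrite hh -ej /= eqxx.
move: ej ej' q1 q2 hjp; rewrite /= => ej ej' q1 q2 hjp.
have ed : nat_of_ord d2 = nat_of_ord d2' by nia.
have ea : nat_of_ord a2 = nat_of_ord a2' by nia.
by rewrite (val_inj ed) (val_inj ea).
Qed.

Lemma W_split (m N0 : nat) : m <= N0 -> k' < k ->
  \sum_(c in Gam) m ^ #|suppc c| * N0 ^ (k + k - #|suppc c|) <=
  #|Gam| * (m ^ (k' + k') * N0 ^ (k + k - (k' + k'))) + #|Gamo| * (m ^ k' * N0 ^ (k + k - k')).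
Proof.
move=> mN kk.
rewrite (big_setID [set c | disj c]) /=.
apply: leq_add.
  apply: (@leq_trans (\sum_(c in Gam :&: [set c | disj c]) (m ^ (k' + k') * N0 ^ (k + k - (k' + k'))))).
    apply: leq_sum => -[x [h1 h2]]; rewrite !inE /= => /andP [/andP [o1 o2] dj].
    apply: wmono => //; last exact: supp_le.
    rewrite /suppc cardsU (eqP dj) cards0 subn0 /= (supph_eq o1) (supph_eq o2).
    case/and5P: o1 => _ _ _ _ q1; case/and5P: o2 => _ _ _ _ q2; exact: leq_add.
  rewrite sum_nat_const leq_mul2r; apply/orP; right.
  by apply: subset_leq_card; exact: subsetIl.
apply: (@leq_trans (\sum_(c in Gamo) (m ^ k' * N0 ^ (k + k - k')))).
  have -> : Gam :\: [set c | disj c] = Gamo by apply/setP => c; rewrite !inE andbC.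
  apply: leq_sum => -[x [h1 h2]]; rewrite !inE /= => /andP [/andP [o1 o2] dj].
  apply: wmono => //; last exact: supp_le.
  apply: leq_trans (subset_leq_card (subsetUl _ _)).
  by rewrite /= (supph_eq o1); case/and5P: o1.
by rewrite sum_nat_const.
Qed.

End APpart.

Lemma INR_expn a j : INR (a ^ j) = (INR a ^ j)%Re.
Proof. elim: j => [|j IH]; first by rewrite expn0. by rewrite expnS mult_INR IH. Qed.

Lemma leINR a b : (a <= b)%N -> (INR a <= INR b)%Re.
Proof. by move/leP; apply: le_INR. Qed.

Lemma INRle a b : (INR a <= INR b)%Re -> (a <= b)%N.
Proof. by move/INR_le/leP. Qed.

Lemma F12 (k n m Q : nat) : (2 <= k)%N -> (1 <= n)%N ->
  ((INR (2 * Q) + 1) * Rpower (INR n) (1 - 1 / INR (k - 1)) <= INR m)%Re ->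
  (2 * Q < m)%N /\ (n ^ (k - 2) <= m ^ (k - 1))%N.
Proof.
move=> k2 n1 h.
have hn : (1 <= INR n)%Re by have := leINR n1.
have hk : (1 <= INR (k - 1))%Re by have := @leINR 1 (k - 1) ltac:(lia).
have he : (0 <= 1 - 1 / INR (k - 1))%Re.
  have : (1 / INR (k - 1) <= 1)%Re.
    by rewrite /Rdiv Rmult_1_l -Rinv_1; apply: Rinv_le_contravar; lra.
  lra.
have hR : (1 <= Rpower (INR n) (1 - 1 / INR (k - 1)))%Re.
  have := Rle_Rpower _ _ _ hn he; rewrite Rpower_O //; lra.
have hQ : (0 <= INR (2 * Q))%Re by apply: pos_INR.
have hm : (Rpower (INR n) (1 - 1 / INR (k - 1)) <= INR m)%Re by nra.
split.
  apply/ltP; apply: INR_lt; nra.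
apply: INRle; rewrite !INR_expn.
rewrite -Rpower_pow; last lra.
apply: Rle_trans (pow_incr _ _ (k - 1) (conj (Rle_trans _ _ _ Rle_0_1 hR) hm)).
rewrite -Rpower_pow; last lra.
rewrite Rpower_mult.
have -> : ((1 - 1 / INR (k - 1)) * INR (k - 1) = INR (k - 2))%Re.
  have -> : INR (k - 2) = (INR (k - 1) - 1)%Re.
    have -> : (k - 1 = (k - 2) + 1)%N by lia.
    rewrite plus_INR /=; lra.
  field; lra.
exact: Rle_refl.
Qed.

Lemma pow_succ_le n j : 1 <= n -> (n + 1) ^ j <= 2 ^ j * n ^ j.
Proof. move=> n1; elim: j => [|j IH]; first by rewrite !expn0. rewrite !expnS; nia. Qed.

Lemma F3 n m k k' : n ^ (k - 2) <= m ^ (k - 1) -> m <= n -> 1 <= k' -> k' < k -> 1 <= n ->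
  n ^ k' <= n * m ^ k'.
Proof.
move=> h mn k1 kk n1.
set r := k - 1 - k'.
have hr : 0 < n ^ r by rewrite expn_gt0 n1.
rewrite -(leq_pmul2r hr) -expnD.
have -> : k' + r = (k - 2).+1 by rewrite /r; lia.
rewrite expnS.
apply: (@leq_trans (n * m ^ (k - 1))); first by rewrite leq_mul2l h orbT.
have -> : k - 1 = k' + r by rewrite /r; lia.
rewrite expnD -mulnA leq_mul2l; apply/orP; right.
rewrite leq_mul2l; apply/orP; right.
by elim: r {hr} => // j IH; rewrite !expnS leq_mul.
Qed.

Lemma Wbound n m k k' : 1 <= n -> m <= n -> 1 <= k' -> k' < k -> n ^ k' <= n * m ^ k' ->
  \sum_(c in Gam n k k') m ^ #|suppc c| * n ^ (k + k - #|suppc c|) <=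
  (8 * (#|{: option 'I_k}| * #|{: {set 'I_k}}|) ^ 2 +
   4 * (#|{: option 'I_k}| * #|{: {set 'I_k}}| * #|{: {set 'I_k}}| * #|{: option ('I_k * 'I_k)}| * #|{: option 'I_k}|)) *
  (n ^ 3 * (m ^ (k' + k') * n ^ (k + k - (k' + k')))).
Proof.
move=> n1 mn k1 kk hF.
apply: leq_trans (W_split n mn kk) _.
set co := #|{: option 'I_k}|; set cs := #|{: {set 'I_k}}|; set cp := #|{: option ('I_k * 'I_k)}|.
have hG : #|Gam n k k'| <= 8 * n ^ 3 * (co * cs) ^ 2.
  apply: leq_trans (card_Gam n k k') _.
  rewrite !card_prod card_ord -/co -/cs.
  have := pow_succ_le 3 n1; rewrite -[n.+1]addn1; nia.
have hGo : #|Gamo n k k'| <= 4 * n ^ 2 * (co * cs * cs * cp * co).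
  apply: leq_trans (card_Gamo n k k') _.
  rewrite !card_prod card_ord -/co -/cs -/cp.
  have := pow_succ_le 2 n1; rewrite -[n.+1]addn1; nia.
have hA : n ^ 2 * (m ^ k' * n ^ (k + k - k')) <= n ^ 3 * (m ^ (k' + k') * n ^ (k + k - (k' + k'))).
  have -> : n ^ (k + k - k') = n ^ k' * n ^ (k + k - (k' + k')) by rewrite -expnD; congr (_ ^ _); lia.
  rewrite expnD (expnS n 2).
  nia.
set A1 := m ^ (k' + k') * n ^ (k + k - (k' + k')) in hA *.
set A2 := m ^ k' * n ^ (k + k - k') in hA *.
set n3 := n ^ 3 in hG hA *; set n2 := n ^ 2 in hGo hA *.
set c1 := (co * cs) ^ 2 in hG *; set c2 := co * cs * cs * cp * co in hGo *.
apply: (@leq_trans (8 * n3 * c1 * A1 + 4 * n2 * c2 * A2)).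
  by apply: leq_add; rewrite leq_mul2r ?hG ?hGo orbT.
rewrite mulnDl; apply: leq_add; first by apply: eq_leq; nia.
have -> : 4 * n2 * c2 * A2 = 4 * c2 * (n2 * A2) by nia.
by rewrite leq_mul2l hA orbT.
Qed.

Lemma expn_mono a c j : a <= c -> a ^ j <= c ^ j.
Proof. by move=> h; elim: j => // j IH; rewrite !expnS leq_mul. Qed.

Lemma divmul_bound m Q : 0 < Q -> 2 * Q < m -> m <= 2 * Q * (m %/ Q).
Proof.
move=> Q0 h; have e1 := divn_eq m Q; have e2 := ltn_pmod m Q0.
move: e1 e2; set q := m %/ Q; set r := m %% Q; nia.
Qed.

Unset Implicit Arguments.

Theorem lemma4 (k' k : nat) (beta xi : R) :
  (1 <= k')%nat -> (k' < k)%nat -> (0 < beta)%Re -> (0 < xi)%Re ->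
  exists C T : R, (0 < C)%Re /\ (0 < T)%Re /\
  exists N : nat, forall n m : nat, (N <= n)%nat ->
    (C * Rpower (INR n) (1 - 1 / INR (k - 1)) <= INR m)%Re ->
    exists B : {set {set 'I_n.+1}},
      (INR #|B| <= pow beta m * INR 'C(n, m))%Re /\
      forall S : {set 'I_n.+1},
        subset_of_n S -> #|S| = m -> S \notin B ->
        exists X : {set 'I_n.+1},
          X \subset S /\ (INR #|X| <= xi * INR m)%Re /\
          (Rinv (INR n) * INR (\sum_(1 <= x < n.+1) (AP n k' k x (inS (S :\: X)) (intn n)) ^ 2)
             <= T * pow (INR n * pow (INR m / INR n) k') 2)%Re.
Proof.
move=> hk1 hkk hb hxi.
have [b hbb] : exists b : nat, (1 <= INR b * beta)%Re.
  have [b hb'] := INR_archimed beta 1 hb; exists b; lra.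
have [Q hQ] : exists Q : nat, (INR (k + k) <= INR Q * xi)%Re.
  have [Q hQ'] := INR_archimed xi (INR (k + k)) hxi; exists Q; lra.
have b0 : 0 < b.
  case: b hbb => // /=; lra.
have Q0 : 0 < Q.
  case: Q hQ => //=; rewrite Rmult_0_l => h.
  have : (INR 1 <= INR (k + k))%Re by apply: leINR; lia.
  simpl; lra.
set co := #|{: option 'I_k}|; set cs := #|{: {set 'I_k}}|; set cp := #|{: option ('I_k * 'I_k)}|.
set K0 := 8 * (co * cs) ^ 2 + 4 * (co * cs * cs * cp * co).
set K1 := K0 * b ^ (2 * Q).
have co0 : 0 < co by apply/card_gt0P; exists None.
have cs0 : 0 < cs by apply/card_gt0P; exists set0.
have K00 : 0 < K0 by rewrite /K0 addn_gt0 muln_gt0 expn_gt0 muln_gt0 co0 cs0.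
have K10 : 0 < K1 by rewrite /K1 muln_gt0 K00 expn_gt0 b0.
have hWg : forall n m, 1 <= n -> m <= n -> n ^ k' <= n * m ^ k' ->
  \sum_(c in Gam n k k') m ^ #|suppc c| * n ^ (k + k - #|suppc c|) <=
  K0 * (n ^ 3 * (m ^ (k' + k') * n ^ (k + k - (k' + k')))).
  by move=> n m n1 mn hF; exact: Wbound.
have eK1 : K1 = K0 * b ^ (2 * Q) by [].
clearbody K1; clearbody K0; clearbody co cs cp.
exists (INR (2 * Q) + 1)%Re, (INR K1).
split; first by have := pos_INR (2 * Q); lra.
split; first by apply: (lt_INR 0); apply/ltP.
exists 1%N => n m n1 hC.
have hk2 : 1 < k by lia.
have [hQm hnm] := F12 hk2 n1 hC.
have hD : #|[set~ (ord0 : 'I_n.+1)]| = n by rewrite cardsC1 card_ord.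
case: (leqP m n) => mn; last first.
  exists set0; split.
    rewrite cards0 /=; apply: Rmult_le_pos; [apply: pow_le; lra | exact: pos_INR].
  move=> S hS Sm _; exfalso.
  have : #|S| <= #|[set~ (ord0 : 'I_n.+1)]|.
    apply: subset_leq_card; apply/subsetP => z zS; rewrite !inE.
    by apply: contraNneq hS => <-.
  rewrite hD; lia.
have hF3 := F3 hnm mn hk1 hkk n1.
set q := m %/ Q.
set L := (K1 * n ^ 3 * m ^ (k' + k')) %/ n ^ (k' + k').
set bad := fun S : {set 'I_n.+1} => [forall X : {set 'I_n.+1}, (X \subset S) && (#|X| <= q * (k + k)) ==> (L < fc (Gam n k k') (@suppc n k) (S :\: X))].
exists [set S in Sm [set~ ord0] m | bad S].
split; last first.
  move=> S hS hSm hSB.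
  have SSm : S \in Sm [set~ ord0] m.
    rewrite inE hSm eqxx andbT; apply/subsetP => z zS; rewrite !inE.
    by apply: contraNneq hS => <-.
  move: hSB; rewrite inE SSm /= => /forallPn [X]; rewrite negb_imply => /andP [/andP [XS Xq] hL].
  rewrite -leqNgt in hL.
  exists X; split => //; split.
    have h1 := leINR Xq; rewrite mult_INR in h1.
    have h2 : (INR (q * Q) <= INR m)%Re by apply: leINR; exact: leq_divM.
    rewrite mult_INR in h2.
    have hq := pos_INR q.
    apply: Rle_trans h1 _.
    apply: Rle_trans (Rmult_le_compat_l _ _ _ hq hQ) _.
    have := Rmult_le_compat_r xi _ _ (Rlt_le _ _ hxi) h2.
    lra.
  have hs := AP_sq_le k k' (S :\: X).
  have hsL := leq_trans hs hL.
  have hLd : L * n ^ (k' + k') <= K1 * n ^ 3 * m ^ (k' + k') by exact: leq_divM.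
  move: (leINR hsL) (leINR hLd); rewrite !mult_INR !INR_expn => hA hB.
  have hn0 : (0 < INR n)%Re by apply: (lt_INR 0); apply/ltP.
  set p := (INR m / INR n)%Re.
  have em : INR m = (p * INR n)%Re by rewrite /p; field; lra.
  rewrite em Rpow_mult_distr in hB.
  have hnj : (0 < INR n ^ (k' + k'))%Re by apply: pow_lt.
  have hL' : (INR L <= INR K1 * INR n ^ 3 * p ^ (k' + k'))%Re.
    apply: (Rmult_le_reg_r _ _ _ hnj); move: hB; rewrite eK1 mult_INR INR_expn /=; lra.
  rewrite pow_add in hL'.
  have hAL := Rle_trans _ _ _ hA hL'.
  have hi : (0 <= / INR n)%Re by apply: Rlt_le; apply: Rinv_0_lt_compat.
  have := Rmult_le_compat_l _ _ _ hi hAL.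
  move: hL'; rewrite eK1 mult_INR INR_expn /= => _ h.
  apply: Rle_trans h _.
  apply: Req_le; field; lra.
set Bs := [set S in Sm [set~ ord0] m | bad S].
have hs : forall c, c \in Gam n k k' -> #|suppc c| <= k + k by move=> c _; exact: supp_le.
have hlow : forall S, S \in Bs -> L.+1 ^ q <= Zc (Gam n k k') (@suppc n k) S q.
  move=> S; rewrite inE => /andP [_ /forallP hb']; apply: (Zc_lower hs) => X XS Xq.
  by have := hb' X; rewrite XS Xq.
have hsum := sumZ hs mn q (D := [set~ ord0]) (m := m) ltac:(by rewrite hD).
rewrite hD in hsum.
set W := \sum_(c in Gam n k k') _ in hsum.
have hW : W <= K0 * (n ^ 3 * (m ^ (k' + k') * n ^ (k + k - (k' + k')))) := hWg n m n1 mn hF3.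
have hBZ : #|Bs| * (L.+1 ^ q * n ^ ((k + k) * q)) <= 'C(n, m) * W ^ q.
  apply: leq_trans _ hsum.
  rewrite -sum_nat_const.
  apply: (@leq_trans (\sum_(S in Bs) Zc (Gam n k k') (@suppc n k) S q * n ^ ((k + k) * q))).
    by apply: leq_sum => S SB; rewrite leq_mul2r hlow ?orbT.
  apply: sum_subset_le; apply/subsetP => S; rewrite inE => /andP [] //.
have hWL : b ^ (2 * Q) * W <= L.+1 * n ^ (k + k).
  have hc := @ltn_ceil (K1 * n ^ 3 * m ^ (k' + k')) (n ^ (k' + k')) ltac:(by rewrite expn_gt0 n1).
  rewrite -/L in hc.
  apply: (@leq_trans (K1 * n ^ 3 * m ^ (k' + k') * n ^ (k + k - (k' + k')))).
    rewrite eK1; apply: (@leq_trans (b ^ (2 * Q) * (K0 * (n ^ 3 * (m ^ (k' + k') * n ^ (k + k - (k' + k'))))))).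
      by rewrite leq_mul2l hW orbT.
    by apply: eq_leq; rewrite !mulnA (mulnC (b ^ (2 * Q)) K0).
  have hkk2 : k' + k' <= k + k by rewrite leq_add // ltnW.
  have -> : n ^ (k + k) = n ^ (k' + k') * n ^ (k + k - (k' + k')) by rewrite -expnD subnKC.
  by rewrite mulnA leq_mul2r (ltnW hc) orbT.
have hY : 0 < L.+1 ^ q * n ^ ((k + k) * q) by rewrite muln_gt0 !expn_gt0 n1.
have hB2 : #|Bs| * b ^ (2 * Q * q) <= 'C(n, m).
  rewrite -(leq_pmul2r hY).
  apply: (@leq_trans ('C(n, m) * W ^ q * b ^ (2 * Q * q))).
    by rewrite mulnAC leq_mul2r hBZ orbT.
  rewrite -mulnA leq_mul2l; apply/orP; right.
  rewrite (expnM b (2 * Q) q) (expnM n (k + k) q) -!expnMn.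
  by apply: expn_mono; rewrite mulnC.
have hmq : m <= 2 * Q * q by exact: divmul_bound.
have hbm : #|Bs| * b ^ m <= 'C(n, m).
  apply: leq_trans hB2; rewrite leq_mul2l; apply/orP; right.
  exact: leq_pexp2l.
have := leINR hbm; rewrite mult_INR INR_expn => h.
have hp : (1 <= (INR b * beta) ^ m)%Re by apply: pow_R1_Rle.
rewrite Rpow_mult_distr in hp.
have h0 := pos_INR #|Bs|; have hbp : (0 <= beta ^ m)%Re by apply: pow_le; lra.
have hby : (0 <= INR b ^ m)%Re by apply: pow_le; apply: pos_INR.
have h1 := Rmult_le_compat_l _ _ _ h0 hp.
have h2 := Rmult_le_compat_r _ _ _ hbp h.
rewrite Rmult_1_r in h1.
have e : (INR #|Bs| * (INR b ^ m * beta ^ m) = INR #|Bs| * INR b ^ m * beta ^ m)%Re by ring.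
apply: (Rle_trans _ _ _ h1); rewrite e (Rmult_comm (beta ^ m)); exact: h2.
Qed.
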